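(* Suppose $d\ge9$ and $k$ is an integer with $\frac d2+1<k\le\frac{2d}3$. If $x\ge\frac{5k-2d}{d-k}$, then $(x+1)f'(x)<k\,f(x)$.
   Context: $f(x)=\binom dk^{-1}\sum_{i=0}^{d-k}\binom ki\binom{d-k}{i}x^{k-i}$ (the probability generating function of the hypergeometric distribution with parameters $(d,k,k)$). *)

(* Defs.v *)
From HB Require Import structures.
From mathcomp Require Import all_boot all_order all_algebra.
Set Implicit Arguments. Unset Strict Implicit. Unset Printing Implicit Defensive.
Import Order.TTheory GRing.Theory Num.Theory.
Local Open Scope ring_scope.

(* Probability generating function of the hypergeometric distribution with
   parameters (d,k,k):
   f(x) = C(d,k)^{-1} * sum_{i=0}^{d-k} C(k,i) C(d-k,i) x^{k-i}. *)
Definition hyp_pgf (R : fieldType) (d k : nat) : {poly R} :=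
  ('C(d, k)%:R)^-1 *:
    \sum_(i < (d - k).+1) (('C(k, i) * 'C(d - k, i))%:R *: 'X^(k - i)).

(* Main.v *)
Require Import Defs.
From HB Require Import structures.
From mathcomp Require Import all_boot all_order all_algebra.
From mathcomp Require Import ring lra zify.
Import Order.TTheory GRing.Theory Num.Theory.
Local Open Scope ring_scope.
Set Implicit Arguments. Unset Strict Implicit. Unset Printing Implicit Defensive.

Definition Mf {R : realFieldType} (i j e : R) := i^+4 + 2*i^+3*j + 3*i^+3*e + i^+3 - 2*i^+2*j^+2 + 2*i^+2*j + 3*i^+2*e - 5*i*j^+2 - 3*i*j*e + 3*j^+4 + 3*j^+3*e - 6*j^+3 - 6*j^+2*e.
Definition Q1f {R : realFieldType} (i j e : R) := i^+4 + 2*i^+3*j + 4*i^+3*e + i^+3 + 3*i^+2*j*e + 2*i^+2*j + 4*i^+2*e - i*j^+2 + 2*i*j*e + j^+4 + j^+3*e - 2*j^+3 - 2*j^+2*e.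
Ltac pos_tac := repeat first [ assumption | apply: ler0n | apply: exprn_ge0 | apply: mulr_ge0 | apply: addr_ge0 ].
Lemma M_r1 {R : realFieldType} (a t u : R) : 0 <= a -> 0 <= t -> 0 <= u ->
  0 <= 2*a+t-(u+3) -> 0 <= 2*a+t-4 -> 0 <= Mf (a+t) a (u+3).
Proof.
move=> h0 h1 h2 h3 h4.
have E : 4%:R * Mf (a+t) a (u+3) = 288%:R + 96%:R * u^+1 * (2*a+t-4)^+1 + 352%:R * (2*a+t-4)^+1 + 96%:R * u^+1 + 72%:R * t^+1 * u^+1 + 376%:R * t^+1 + 18%:R * t^+1 * u^+1 * (2*a+t-4)^+1 + 148%:R * t^+2 + 36%:R * t^+2 * u^+1 + 4%:R * t^+2 * (2*a+t-4)^+2 + 118%:R * t^+1 * (2*a+t-4)^+1 + 138%:R * (2*a+t-4)^+2 + 30%:R * u^+1 * (2*a+t-4)^+2 + 24%:R * a^+1 * t^+2 + 53%:R * t^+2 * (2*a+t-4)^+1 + 9%:R * t^+2 * u^+1 * (2*a+t-4)^+1 + 2%:R * t^+1 * (2*a+t-4)^+2 + 3%:R * u^+1 * (2*a+t-4)^+3 + 6%:R * a^+1 * t^+2 * (2*a+t-4)^+1 + 17%:R * (2*a+t-4)^+3 + 2%:R * a^+1 * (2*a+t-4)^+3 by rewrite /Mf; ring.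
have : 0 <= 4%:R * Mf (a+t) a (u+3) by rewrite E; pos_tac.
by rewrite pmulr_rge0 // ltr0n.
Qed.

Lemma M_r2 {R : realFieldType} (a t u : R) : 0 <= a -> 0 <= t -> 0 <= u ->
  0 <= 3*a+t-(u+3) -> 0 <= 3*a+t-4 -> 0 <= Mf a (2*a+t) (u+3).
Proof.
move=> h0 h1 h2 h3 h4.
have E : 9%:R * Mf a (2*a+t) (u+3) = 86%:R * (3*a+t-4)^+3 + 81%:R * u^+1 * (3*a+t-4)^+2 + 920%:R * (3*a+t-4)^+1 + 120%:R * t^+1 * (3*a+t-4)^+2 + 10%:R * t^+1 * (3*a+t-4)^+3 + 9%:R * t^+1 * u^+1 * (3*a+t-4)^+2 + 101%:R * t^+2 * (3*a+t-4)^+1 + 36%:R * t^+2 * u^+1 + 8%:R * t^+3 + 399%:R * t^+1 * (3*a+t-4)^+1 + 45%:R * t^+1 * u^+1 * (3*a+t-4)^+1 + 244%:R * t^+2 + 2%:R * t^+3 * (3*a+t-4)^+1 + 5%:R * (3*a+t-4)^+4 + 9%:R * u^+1 * (3*a+t-4)^+3 + 9%:R * t^+2 * u^+1 * (3*a+t-4)^+1 + 471%:R * (3*a+t-4)^+2 + 36%:R * t^+1 * u^+1 + 10%:R * t^+2 * (3*a+t-4)^+2 + 368%:R + 144%:R * u^+1 + 316%:R * t^+1 + 216%:R * u^+1 * (3*a+t-4)^+1 by rewrite /Mf; ring.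
have : 0 <= 9%:R * Mf a (2*a+t) (u+3) by rewrite E; pos_tac.
by rewrite pmulr_rge0 // ltr0n.
Qed.

Lemma M_r3 {R : realFieldType} (a t u : R) : 0 <= a -> 0 <= t -> 0 <= u ->
  0 <= 3*a+2*t-(u+3) -> 0 <= 3*a+2*t-4 -> 0 <= Mf (a+t) (2*a+t) (u+3).
Proof.
move=> h0 h1 h2 h3 h4.
have E : 6%:R * Mf (a+t) (2*a+t) (u+3) = 36%:R * a^+1 * u^+1 + 31%:R * u^+1 * (3*a+2*t-4)^+2 + 6%:R * t^+2 * u^+1 * (3*a+2*t-4)^+1 + 2%:R * a^+1 * t^+2 * (3*a+2*t-4)^+1 + 48%:R * (3*a+2*t-4)^+1 + 3%:R * u^+1 * (3*a+2*t-4)^+3 + 33%:R * a^+1 * u^+1 * (3*a+2*t-4)^+1 + 88%:R * u^+1 * (3*a+2*t-4)^+1 + 52%:R * a^+1 + 24%:R * t^+2 * u^+1 + 108%:R * t^+2 + 6%:R * t^+2 * (3*a+2*t-4)^+2 + 10%:R * a^+1 * (3*a+2*t-4)^+3 + 9%:R * a^+1 * u^+1 * (3*a+2*t-4)^+2 + 48%:R * u^+1 + 132%:R * a^+1 * (3*a+2*t-4)^+2 + 62%:R * t^+2 * (3*a+2*t-4)^+1 + 8%:R * a^+1 * t^+2 + 12%:R * (3*a+2*t-4)^+2 + 8%:R * t^+1 * (3*a+2*t-(u+3))^+1 * (3*a+2*t-4)^+1 + 345%:R * a^+1 * (3*a+2*t-4)^+1 + 99%:R * a^+2 by rewrite /Mf;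 ring.
have : 0 <= 6%:R * Mf (a+t) (2*a+t) (u+3) by rewrite E; pos_tac.
by rewrite pmulr_rge0 // ltr0n.
Qed.

Lemma Q1_r1 {R : realFieldType} (a t u : R) : 0 <= a -> 0 <= t -> 0 <= u ->
  0 <= 2*a+t-(u+3) -> 0 <= 2*a+t-4 -> 0 <= Q1f a (a+t) (u+3).
Proof.
move=> h0 h1 h2 h3 h4.
have E : 8%:R * Q1f a (a+t) (u+3) = 24%:R * (2*a+t-4)^+2 + 72%:R * t^+2 + 148%:R * a^+2 * (2*a+t-4)^+1 + 48%:R * (2*a+t-4)^+1 + 8%:R * t^+3 + 32%:R * t^+1 * (2*a+t-(u+3))^+1 + 2%:R * t^+3 * (2*a+t-4)^+1 + 10%:R * t^+2 * u^+1 * (2*a+t-4)^+1 + 128%:R * a^+1 * u^+1 + 24%:R * t^+2 * u^+1 + 4%:R * t^+2 * (2*a+t-4)^+2 + 12%:R * a^+1 * u^+1 * (2*a+t-4)^+2 + 96%:R * a^+2 * u^+1 + 2%:R * t^+1 * (2*a+t-(u+3))^+1 * (2*a+t-4)^+2 + 3%:R * (2*a+t-4)^+3 + 8%:R * a^+2 * (2*a+t-4)^+2 + 43%:R * t^+2 * (2*a+t-4)^+1 + 608%:R * a^+2 + 8%:R * a^+2 * u^+1 * (2*a+t-4)^+1 + 80%:R * a^+1 * u^+1 * (2*a+t-4)^+1 + 16%:R * t^+1 * (2*a+t-(u+3))^+1 * (2*a+t-4)^+1 by rewrite /Q1f; ring.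
have : 0 <= 8%:R * Q1f a (a+t) (u+3) by rewrite E; pos_tac.
by rewrite pmulr_rge0 // ltr0n.
Qed.

Lemma Q1_r2 {R : realFieldType} (a t u : R) : 0 <= a -> 0 <= t -> 0 <= u ->
  0 <= 2*a+t-(u+3) -> 0 <= 2*a+t-4 -> 0 <= Q1f (a+t) a (u+3).
Proof.
move=> h0 h1 h2 h3 h4.
have E : 4%:R * Q1f (a+t) a (u+3) = 1216%:R + 1%:R * (2*a+t-4)^+4 + 928%:R * (2*a+t-4)^+1 + 224%:R * u^+1 * (2*a+t-4)^+1 + 592%:R * t^+1 + 60%:R * t^+1 * u^+1 * (2*a+t-4)^+1 + 96%:R * t^+2 + 24%:R * t^+2 * u^+1 + 2%:R * t^+2 * (2*a+t-4)^+2 + 276%:R * t^+1 * (2*a+t-4)^+1 + 1%:R * t^+1 * (2*a+t-4)^+3 + 32%:R * t^+2 * (2*a+t-4)^+1 + 6%:R * t^+2 * u^+1 * (2*a+t-4)^+1 + 8%:R * a^+1 * t^+2 + 2%:R * a^+1 * t^+2 * (2*a+t-4)^+1 + 252%:R * (2*a+t-4)^+2 + 320%:R * u^+1 + 36%:R * t^+1 * (2*a+t-4)^+2 + 6%:R * t^+1 * u^+1 * (2*a+t-4)^+2 + 28%:R * (2*a+t-4)^+3 + 4%:R * u^+1 * (2*a+t-4)^+3 + 144%:R * t^+1 * u^+1 + 52%:R * u^+1 * (2*a+t-4)^+2 by rewrite /Q1f; ring.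
have : 0 <= 4%:R * Q1f (a+t) a (u+3) by rewrite E; pos_tac.
by rewrite pmulr_rge0 // ltr0n.
Qed.

Lemma Mf_nonneg {R : realFieldType} (I J e : R) : 0 <= I -> 0 <= J -> 3 <= e -> e <= I + J -> 4 <= I + J ->
  0 <= Mf I J e.
Proof.
move=> hI hJ he1 he2 hm.
have Ee : e = (e - 3) + 3 by ring.
case: (lerP J I) => hJI.
- have H := @M_r1 _ J (I - J) (e - 3).
  rewrite (_ : J + (I - J) = I) in H; last by ring.
  rewrite -Ee in H. apply: H; lra.
case: (lerP (2*I) J) => h2.
- have H := @M_r2 _ I (J - 2*I) (e - 3).
  rewrite (_ : 2*I + (J - 2*I) = J) in H; last by ring.
  rewrite -Ee in H. apply: H; lra.
- have H := @M_r3 _ (J - I) (2*I - J) (e - 3).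
  rewrite (_ : J - I + (2*I - J) = I) in H; last by ring.
  rewrite (_ : 2*(J - I) + (2*I - J) = J) in H; last by ring.
  rewrite -Ee in H. apply: H; lra.
Qed.

Lemma Q1f_nonneg {R : realFieldType} (I J e : R) : 0 <= I -> 0 <= J -> 3 <= e -> e <= I + J -> 4 <= I + J ->
  0 <= Q1f I J e.
Proof.
move=> hI hJ he1 he2 hm.
have Ee : e = (e - 3) + 3 by ring.
case: (lerP J I) => hJI.
- have H := @Q1_r2 _ J (I - J) (e - 3).
  rewrite (_ : J + (I - J) = I) in H; last by ring.
  rewrite -Ee in H. apply: H; lra.
- have H := @Q1_r1 _ I (J - I) (e - 3).
  rewrite (_ : I + (J - I) = J) in H; last by ring.
  rewrite -Ee in H. apply: H; lra.
Qed.

Definition Nf {R : realFieldType} (x i j e : R) :=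
  2*(i+j)*x*(i+1)*(i*(x+1)-(i+j+e)) + ((i+j+e)-i)*((i+j)-i)*((x-1)*(i+j)+2*(i+1))
  - x*i*(i+1)*((x-1)*(i+j)+2*i).

Lemma Nf_id {R : realFieldType} (x i j e : R) :
  (i+j)^+2 * Nf x i j e = e * Mf i j e + Q1f i j e * ((i+j)*x - (i+j) - 3*e)
     + (i^+3 + i^+2*j + i^+2 + i*j) * ((i+j)*x - (i+j) - 3*e)^+2.
Proof. rewrite /Nf /Mf /Q1f; ring. Qed.

Lemma Nf_nonneg {R : realFieldType} (x i j e : R) : 0 <= i -> 0 <= j -> 3 <= e -> e <= i + j -> 4 <= i + j ->
  0 <= (i+j)*x - (i+j) - 3*e -> 0 <= Nf x i j e.
Proof.
move=> hi hj he1 he2 hm hY.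
have h : 0 <= (i+j)^+2 * Nf x i j e.
  rewrite Nf_id; apply: addr_ge0; first apply: addr_ge0.
  - apply: mulr_ge0; [lra | exact: Mf_nonneg].
  - apply: mulr_ge0; [exact: Q1f_nonneg | done].
  - apply: mulr_ge0; [pos_tac | exact: exprn_ge0].
have hp : 0 < (i+j)^+2 by apply: exprn_gt0; lra.
by rewrite pmulr_rge0 in h.
Qed.


Definition Wt {R : realFieldType} (x : R) (k m i : nat) : R := ('C(k, i) * 'C(m, i))%:R * x ^+ (k - i).
Definition Tb {R : realFieldType} (x b : R) (m i : nat) : R := (x - 1) * m%:R + b * i%:R.
Definition Nb {R : realFieldType} (x b : R) (k m i : nat) : R :=
  2 * m%:R * x * (i%:R + 1) * (i%:R * (x + 1) - k%:R)
  + (k%:R - i%:R) * (m%:R - i%:R) * Tb x b m i.+1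
  - x * i%:R * (i%:R + 1) * Tb x b m i.

Lemma term_id {R : realFieldType} (x b : R) (k m i : nat) : (i < m)%N -> (m < k)%N ->
  Wt x k m i.+1 * (x * i.+1%:R * Tb x b m i.+1)
  = Wt x k m i * ((k%:R - i%:R) * (m%:R - i%:R) / (i%:R + 1) * Tb x b m i.+1).
Proof.
move=> him hmk.
have hik : (i < k)%N by apply: ltn_trans hmk.
have h1 : (i.+1)%:R * ('C(k, i.+1))%:R = (k%:R - i%:R) * ('C(k, i))%:R :> R.
  by rewrite -!natrM mul_bin_left natrM natrB // ltnW.
have h2 : (i.+1)%:R * ('C(m, i.+1))%:R = (m%:R - i%:R) * ('C(m, i))%:R :> R.
  by rewrite -!natrM mul_bin_left natrM natrB // ltnW.
have hn : (k - i = (k - i.+1).+1)%N by rewrite subnSK.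
rewrite /Wt hn exprS !natrM.
have hi1 : (i%:R + 1 : R) != 0 by rewrite natr1 pnatr_eq0.
have -> : ('C(k, i))%:R * ('C(m, i))%:R * (x * x ^+ (k - i.+1)) *
    ((k%:R - i%:R) * (m%:R - i%:R) / (i%:R + 1) * Tb x b m i.+1)
  = ((k%:R - i%:R) * ('C(k, i))%:R) * ((m%:R - i%:R) * ('C(m, i))%:R) * x * x ^+ (k - i.+1)
     * Tb x b m i.+1 / (i%:R + 1) by field.
rewrite -h1 -h2.
rewrite -natr1 in hi1 *.
by field.
Qed.

Lemma shift_id {R : realFieldType} (x b : R) (k m : nat) : (m < k)%N ->
  \sum_(i < m.+1) Wt x k m i * (x * i%:R * Tb x b m i)
  = \sum_(i < m.+1) Wt x k m i * ((k%:R - i%:R) * (m%:R - i%:R) / (i%:R + 1) * Tb x b m i.+1).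
Proof.
move=> hmk.
rewrite big_ord_recl big_ord_recr /=.
rewrite subrr; do 4 rewrite ?mulr0 ?mul0r; rewrite add0r addr0.
apply: eq_bigr => i _.
rewrite /bump /=.
exact: term_id.
Qed.

Lemma key {R : realFieldType} (x b : R) (k m : nat) : (m < k)%N -> 0 < x -> (0 < m)%N ->
  (forall i, (i <= m)%N -> 0 <= Nb x b k m i) -> 0 < Nb x b k m m ->
  0 < \sum_(i < m.+1) Wt x k m i * (i%:R * (x + 1) - k%:R).
Proof.
move=> hmk hx hm0 hN hNm.
have hc : 0 < 2 * m%:R * x.
  by apply: mulr_gt0 => //; apply: mulr_gt0 => //; rewrite ltr0n.
rewrite -(pmulr_rgt0 _ hc) mulr_sumr.
have E : \sum_(i < m.+1) 2 * m%:R * x * (Wt x k m i * (i%:R * (x + 1) - k%:R)) =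
   \sum_(i < m.+1) (2 * m%:R * x * (Wt x k m i * (i%:R * (x + 1) - k%:R)) +
   Wt x k m i * ((k%:R - i%:R) * (m%:R - i%:R) / (i%:R + 1) * Tb x b m i.+1) -
   Wt x k m i * (x * i%:R * Tb x b m i)).
  by rewrite sumrB big_split /= (@shift_id _ x b k m hmk) addrK.
rewrite E.
have tE : forall i : nat, 2 * m%:R * x * (Wt x k m i * (i%:R * (x + 1) - k%:R)) +
   Wt x k m i * ((k%:R - i%:R) * (m%:R - i%:R) / (i%:R + 1) * Tb x b m i.+1) -
   Wt x k m i * (x * i%:R * Tb x b m i) = Wt x k m i * Nb x b k m i / (i%:R + 1).
  move=> i; have hi1 : (i%:R + 1 : R) != 0 by rewrite natr1 pnatr_eq0.
  rewrite /Nb; field => //.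
have W0 : forall i : nat, 0 <= Wt x k m i.
  by move=> i; rewrite /Wt; apply: mulr_ge0; [exact: ler0n | apply: exprn_ge0; exact: ltW].
rewrite big_ord_recr /=.
have h1 : 0 <= \sum_(i < m) (2 * m%:R * x * (Wt x k m i * (i%:R * (x + 1) - k%:R)) +
   Wt x k m i * ((k%:R - i%:R) * (m%:R - i%:R) / (i%:R + 1) * Tb x b m i.+1) -
   Wt x k m i * (x * i%:R * Tb x b m i)).
  apply: sumr_ge0 => i _; rewrite tE.
  apply: divr_ge0; last by rewrite natr1 ler0n.
  apply: mulr_ge0; first exact: W0.
  apply: hN; exact: ltnW.
have h2 : 0 < Wt x k m m * Nb x b k m m / (m%:R + 1).
  apply: divr_gt0; last by rewrite natr1 ltr0n.
  apply: mulr_gt0 => //.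
  rewrite /Wt; apply: mulr_gt0; last exact: exprn_gt0.
  by rewrite ltr0n muln_gt0 !bin_gt0 leqnn ltnW.
rewrite tE.
exact: ltr_wpDl h1 h2.
Qed.


Theorem lemma13 (R : realFieldType) (d k : nat) (x : R) :
  (9 <= d)%N ->
  (d + 2 < 2 * k)%N ->
  (3 * k <= 2 * d)%N ->
  (5 * k%:R - 2 * d%:R) / (d%:R - k%:R) <= x ->
  (x + 1) * (hyp_pgf R d k)^`().[x] < k%:R * (hyp_pgf R d k).[x].
Proof.
move=> H1 H2 H3 Hx.
have hkd : (k < d)%N by lia.
have hm3 : (d - k + 3 <= k)%N by lia.
have hk2 : (k <= 2 * (d - k))%N by lia.
have hm0 : (3 <= d - k)%N by lia.
have hdR : (d%:R : R) = k%:R + (d - k)%:R by rewrite -natrD subnKC // ltnW.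
rewrite /hyp_pgf.
set m := (d - k)%N in hm3 hk2 hm0 hdR *.
have mR : (0 : R) < m%:R by rewrite ltr0n; lia.
rewrite (_ : d%:R - k%:R = m%:R) in Hx; last by rewrite hdR; ring.
rewrite ler_pdivrMr // in Hx.
have hmk : (m < k)%N by lia.
have h3 : (3%:R : R) <= k%:R - m%:R by rewrite -natrB ?ler_nat; lia.
have h4 : (k%:R : R) <= 2 * m%:R by rewrite -natrM ler_nat.
have HY : 0 <= m%:R * x - m%:R - 3 * (k%:R - m%:R).
  rewrite hdR in Hx. nra.
have hx0 : 0 < x by nra.
rewrite derivZ !hornerZ raddf_sum !horner_sum.
set c := ('C(d, k)%:R : R)^-1.
have hc : 0 < c by rewrite invr_gt0 ltr0n bin_gt0 ltnW.
set D := \sum_(i < m.+1) _.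
set P := \sum_(i < m.+1) _.
have eP : P = \sum_(i < m.+1) Wt x k m i.
  by apply: eq_bigr => i _; rewrite hornerZ hornerXn.
have eS : \sum_(i < m.+1) Wt x k m i * (i%:R * (x + 1) - k%:R) = x * (k%:R * P) - x * ((x + 1) * D).
  rewrite eP /D !mulr_sumr -sumrB; apply: eq_bigr => i _.
  rewrite /= derivZ hornerZ derivXn hornerMn hornerXn.
  have hik : (i < k)%N by apply: leq_ltn_trans hmk; rewrite -ltnS.
  case hn: (k - i)%N => [|n]; first by move: hn hik; lia.
  have hR : (n.+1%:R : R) = k%:R - i%:R by rewrite -hn natrB // ltnW.
  rewrite /Wt hn /= exprS -[_ *+ n.+1]mulr_natr hR.
  ring.
have hS : 0 < \sum_(i < m.+1) Wt x k m i * (i%:R * (x + 1) - k%:R).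
  have [m3|m4] : (m = 3 \/ 4 <= m)%N by lia.
  - have hk6 : k = 6%N by lia.
    have hx4 : 4 <= x.
      rewrite m3 hk6 in HY. lra.
    apply: (@key _ x (5/2) k m) => //; first by lia.
    + move=> i hi; rewrite /Nb /Tb m3 hk6.
      rewrite m3 in hi.
      case: i hi => [|[|[|[|i]]]] hi //=; nra.
    + rewrite /Nb /Tb m3 hk6 /=; nra.
  - apply: (@key _ x 2 k m) => //; first by lia.
    + move=> i hi.
      have -> : Nb x 2 k m i = Nf x i%:R (m%:R - i%:R) (k%:R - m%:R).
        by rewrite /Nb /Tb /Nf -natr1; ring.
      have hi' : (i%:R : R) <= m%:R by rewrite ler_nat.
      have h4' : (4 : R) <= m%:R by rewrite ler_nat.
      apply: Nf_nonneg; try lra.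
      all: try exact: ler0n.
    + have -> : Nb x 2 k m m = m%:R * x * (m%:R + 1) * (m%:R * (x + 1) - 2 * k%:R).
        by rewrite /Nb /Tb -natr1; ring.
      apply: mulr_gt0; last by lra.
      apply: mulr_gt0; last by lra.
      exact: mulr_gt0.
rewrite eS -mulrBr pmulr_rgt0 // in hS.
rewrite mulrCA [k%:R * _]mulrCA ltr_pM2l //.
by rewrite -subr_gt0.
Qed.
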